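(* Consider an ergodic Jackson network process $\mathbf{X}$ (setting in the context) whose extended routing matrix $r$ is reversible (with respect to $\eta$), with stationary distribution $\xi(\mathbf{n})=\prod_{j=1}^{J}\prod_{k=1}^{n_j}\frac{\eta_j}{\mu_j(k)}C(j)^{-1}$. Let $\boldsymbol{\gamma}=(\gamma_j:j\in\overline{J})\in[0,1]^{\overline{J}}$, define $\boldsymbol{\alpha}=(\alpha_j:j\in\overline{J}_0)$ by $\alpha_0=1$, $\alpha_j=\gamma_j$ for $j\in\overline{J}$, and let $r^{(\boldsymbol{\alpha})}$ be the randomized-reflection modification of $r$: $r^{(\boldsymbol{\alpha})}(i,j)=r(i,j)\alpha_j$ for $i\neq j$, $r^{(\boldsymbol{\alpha})}(i,i)=1-\sum_{j\ne i}r(i,j)\alpha_j$. Let $\mathbf{X}^{(\boldsymbol{\gamma})}$ be the continuous-time Markov chain on $\mathbb{N}_0^{\overline{J}}$ whose positive transition rates are $q(\mathbf{n},\mathbf{n}+\mathbf{e}_i)=\lambda r^{(\boldsymbol{\alpha})}(0,i)$ for $i\in\overline{J}$, $q(\mathbf{n},\mathbf{n}-\mathbf{e}_j+\mathbf{e}_i)=1_{[n_j>0]}\gamma_j\mu_j(n_j)r^{(\boldsymbol{\alpha})}(j,i)$ for $i,j\in\overline{J}$, $i\ne j$, and $q(\mathbf{n},\mathbf{n}-\mathbf{e}_j)=1_{[n_j>0]}\gamma_j\mu_j(n_j)r^{(\boldsymbol{\alpha})}(j,0)$ for $j\in\overline{J}$. Let $B(\boldsymbol{\gamma})=\{j\in\overline{J}:\gamma_j=0\}$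 and $W(\boldsymbol{\gamma})=\overline{J}\setminus B(\boldsymbol{\gamma})$. Then $\xi$ is a stationary distribution of $\mathbf{X}^{(\boldsymbol{\gamma})}$. If $B(\boldsymbol{\gamma})=\emptyset$, then $\mathbf{X}^{(\boldsymbol{\gamma})}$ is ergodic. If $B(\boldsymbol{\gamma})\neq\emptyset$, then $\mathbf{X}^{(\boldsymbol{\gamma})}$ is not irreducible on $\mathbb{N}_0^{\overline{J}}$, its state space splits into the infinitely many closed subspaces $\mathbb{N}_0^{W(\boldsymbol{\gamma})}\times\{(n_j:j\in B(\boldsymbol{\gamma}))\}$, $(n_j:j\in B(\boldsymbol{\gamma}))\in\mathbb{N}_0^{B(\boldsymbol{\gamma})}$, and for every probability distribution $\varphi$ on $\mathbb{N}_0^{B(\boldsymbol{\gamma})}$ the distribution \[ \xi^{(\boldsymbol{\gamma})}_\varphi(\mathbf{n})=\prod_{j\in W(\boldsymbol{\gamma})}\prod_{k=1}^{n_j}\frac{\eta_j}{\mu_j(k)}C(j)^{-1}\cdot\varphi(n_j:j\in B(\boldsymbol{\gamma})),\qquad \mathbf{n}\in\mathbb{N}_0^{\overline{J}}, \] is a stationary distribution of $\mathbf{X}^{(\boldsymbol{\gamma})}$.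
   Context: Jackson network setting: node set $\overline{J}=\{1,\dots,J\}$, extended node set $\overline{J}_0=\{0,1,\dots,J\}$ (0 = external source/sink). External Poisson arrivals at node $j$ with rates $\lambda_j\ge0$, $\lambda=\sum_j\lambda_j>0$; single servers with infinite waiting room, FCFS, service intensity $\mu_j(n_j)>0$ when $n_j>0$ customers are at node $j$. Extended routing matrix $r=(r(i,j):i,j\in\overline{J}_0)$ is stochastic and irreducible with $r(0,j)=\lambda_j/\lambda$, $r(0,0)=0$. $\eta=(\eta_j:j\in\overline{J}_0)$ is the extended traffic solution: $\eta_0=\lambda$ and $\eta_j=\sum_{i\in\overline{J}_0}\eta_i r(i,j)$ for all $j\in\overline{J}_0$; reversibility of $r$ means $\eta_i r(i,j)=\eta_j r(j,i)$ for all $i,j$. The Jackson network process $\mathbf{X}$ is the Markov chain on $\mathbb{N}_0^{\overline{J}}$ with rates $q(\mathbf{n},\mathbf{n}+\mathbf{e}_i)=\lambda r(0,i)$, $q(\mathbf{n},\mathbf{n}-\mathbf{e}_j+\mathbf{e}_i)=1_{[n_j>0]}\mu_j(n_j)r(j,i)$ ($i\neq j$), $q(\mathbf{n},\mathbf{n}-\mathbf{e}_j)=1_{[n_j>0]}\mu_j(n_j)r(j,0)$; it is assumed ergodic, and $C(j)=\sum_{n\ge0}\prod_{k=1}^n\eta_j/\mu_j(k)<\infty$. $\mathbf{e}_j$ is the $j$-th unit vector. *)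

(* Defs.v *)
From HB Require Import structures.
From mathcomp Require Import all_boot all_order all_algebra.
From mathcomp Require Import all_classical all_reals all_analysis.
Set Implicit Arguments. Unset Strict Implicit. Unset Printing Implicit Defensive.
Import Order.TTheory GRing.Theory Num.Theory numFieldNormedType.Exports.
Local Open Scope ring_scope.
Local Open Scope classical_set_scope.

Section Jackson.
Variables (R : realType) (J : nat).

(* Extended node set \overline{J}_0 = 'I_J.+1 with 0 = ord0 the source/sink;
   node j of \overline{J} (encoded as j : 'I_J) is ext j = lift ord0 j. *)
Definition ext (j : 'I_J) : 'I_J.+1 := lift ord0 j.

Definition state := {ffun 'I_J -> nat}.

(* n + e_i and n - e_j (the latter only used when n_j > 0). *)
Definition up (n : state) (i : 'I_J) : state :=
  [ffun k => if k == i then (n k).+1 else n k].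
Definition down (n : state) (j : 'I_J) : state :=
  [ffun k => if k == j then (n k).-1 else n k].

Definition alpha (gamma : 'I_J -> R) (a : 'I_J.+1) : R :=
  if unlift ord0 a is Some j then gamma j else 1.

Definition ralpha (r : 'I_J.+1 -> 'I_J.+1 -> R) (gamma : 'I_J -> R)
    (a b : 'I_J.+1) : R :=
  if a == b then 1 - \sum_(c | c != a) r a c * alpha gamma c
  else r a b * alpha gamma b.

(* Transition rates q(n,m) of X^(gamma); lam = total external arrival rate.
   The Jackson network X itself is the case gamma = 1. *)
Definition rate (lam : R) (mu : 'I_J -> nat -> R) (r : 'I_J.+1 -> 'I_J.+1 -> R)
    (gamma : 'I_J -> R) (n m : state) : R :=
  \sum_(i : 'I_J) (if m == up n i then lam * ralpha r gamma ord0 (ext i) else 0)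
  + \sum_(j : 'I_J) \sum_(i : 'I_J | i != j)
      (if (0 < n j)%N && (m == up (down n j) i)
       then gamma j * mu j (n j) * ralpha r gamma (ext j) (ext i) else 0)
  + \sum_(j : 'I_J)
      (if (0 < n j)%N && (m == down n j)
       then gamma j * mu j (n j) * ralpha r gamma (ext j) ord0 else 0).

Definition stationary {S : choiceType} (q : S -> S -> R) (xi : S -> R) : Prop :=
  [/\ (forall n, 0 <= xi n),
      (\esum_(n in [set: S]) (xi n)%:E = 1)%E &
      forall n, (\esum_(m in [set m | m != n]) (xi m * q m n)%:E
                 = \esum_(m in [set m | m != n]) (xi n * q n m)%:E)%E].

Definition reachable {S : choiceType} (q : S -> S -> R) (n m : S) : Prop :=
  exists s : seq S, path (fun a b => 0 < q a b) n s && (last n s == m).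

Definition irreducible {S : choiceType} (q : S -> S -> R) : Prop :=
  forall n m, reachable q n m.

(* ergodic = irreducible and positive recurrent, read (as usual for
   regular queueing processes) as irreducible with a stationary distribution *)
Definition ergodic {S : choiceType} (q : S -> S -> R) : Prop :=
  irreducible q /\ exists xi, stationary q xi.

Definition pterm (eta : 'I_J.+1 -> R) (mu : 'I_J -> nat -> R) (j : 'I_J) (n : nat) : R :=
  \prod_(1 <= k < n.+1) (eta (ext j) / mu j k).

Definition Cnorm (eta : 'I_J.+1 -> R) (mu : 'I_J -> nat -> R) (j : 'I_J) : R :=
  limn (series (pterm eta mu j)).

Definition xi (eta : 'I_J.+1 -> R) (mu : 'I_J -> nat -> R) (n : state) : R :=
  \prod_(j : 'I_J) (pterm eta mu j (n j) / Cnorm eta mu j).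

Definition Bconf (gamma : 'I_J -> R) := {ffun {j : 'I_J | gamma j == 0} -> nat}.

Definition restrB (gamma : 'I_J -> R) (n : state) : Bconf gamma :=
  [ffun k => n (val k)].

Definition xi_phi (eta : 'I_J.+1 -> R) (mu : 'I_J -> nat -> R) (gamma : 'I_J -> R)
    (phi : Bconf gamma -> R) (n : state) : R :=
  (\prod_(j : 'I_J | gamma j != 0) (pterm eta mu j (n j) / Cnorm eta mu j))
  * phi (restrB gamma n).

End Jackson.

(* Main.v *)
Require Import Defs.
From HB Require Import structures.
From mathcomp Require Import all_boot all_order all_algebra.
From mathcomp Require Import all_classical all_reals all_analysis.
From mathcomp Require Import ring lra zify.
Import Order.TTheory GRing.Theory Num.Theory numFieldNormedType.Exports.
Local Open Scope ring_scope.
Local Open Scope classical_set_scope.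

Module M_t3.
Section S.
Context (J : nat).
Implicit Types (n m : state J) (i j k : 'I_J).

Lemma upE n i k : up n i k = if k == i then (n k).+1 else n k.
Proof. by rewrite ffunE. Qed.
Lemma downE n i k : Defs.down n i k = if k == i then (n k).-1 else n k.
Proof. by rewrite ffunE. Qed.

Lemma eq_up n m i : (n == up m i) = (0 < n i)%N && (m == Defs.down n i).
Proof.
apply/eqP/andP => [->|[ni /eqP ->]].
  rewrite upE eqxx; split=> //; apply/eqP/ffunP => k.
  by rewrite downE upE; case: (k == i).
apply/ffunP => k; rewrite upE downE; case: eqP => [->|//].
by rewrite prednK.
Qed.

Lemma eq_down n m j : (0 < m j)%N && (n == Defs.down m j) = (m == up n j).
Proof.
apply/andP/eqP => [[mj /eqP ->]|->].
  apply/ffunP => k; rewrite upE downE; case: eqP => [->|//].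
  by rewrite prednK.
rewrite upE eqxx; split=> //; apply/eqP/ffunP => k.
by rewrite downE upE; case: (k == j).
Qed.

Lemma eq_updown n m i j : i != j ->
  (0 < m j)%N && (n == up (Defs.down m j) i) = (0 < n i)%N && (m == up (Defs.down n i) j).
Proof.
move=> ij.
have H : forall n m i j, i != j -> (0 < m j)%N && (n == up (Defs.down m j) i) ->
  (0 < n i)%N && (m == up (Defs.down n i) j).
  move=> {}n {}m {}i {}j {}ij /andP[mj /eqP ->].
  rewrite upE eqxx /=; apply/eqP/ffunP => k.
  have ji : j != i by rewrite eq_sym.
  rewrite !ffunE; case: (eqVneq k i) => [->|ki].
    by rewrite (negPf ij).
  case: (eqVneq k j) => [->|kj] //.
  by rewrite prednK.
by apply/idP/idP; apply: H; rewrite // eq_sym.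
Qed.

Lemma up_neq n i : up n i != n.
Proof. by apply/eqP => /ffunP /(_ i); rewrite upE eqxx => /eqP; rewrite eqn_leq ltnn. Qed.

Lemma down_neq n i : (0 < n i)%N -> Defs.down n i != n.
Proof.
move=> ni; apply/eqP => /ffunP /(_ i); rewrite downE eqxx.
by case: (n i) ni => // k _ /eqP; rewrite eqn_leq ltnn andbF.
Qed.

Lemma updown_neq n i j : i != j -> up (Defs.down n i) j != n.
Proof.
move=> ij; apply/eqP => /ffunP /(_ j); rewrite upE downE eqxx eq_sym (negPf ij).
by move=> /eqP; rewrite eqn_leq ltnn.
Qed.
End S.

End M_t3.
Import M_t3.

Module M_t5.
Lemma eta_pos (R : realType) (J : nat) (lam : R) (r : 'I_J.+1 -> 'I_J.+1 -> R) (eta : 'I_J.+1 -> R) :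
  0 < lam -> (forall a b, 0 <= r a b) ->
  (forall a b, connect (fun a b => 0 < r a b) a b) ->
  eta ord0 = lam -> (forall a b, eta a * r a b = eta b * r b a) ->
  forall b, 0 < eta b.
Proof.
move=> lam0 r0 conn e0 rev b; move/connectP: (conn ord0 b) => [p].
have : 0 < eta ord0 by rewrite e0.
elim: p (ord0 : 'I_J.+1) => [|c p IH] a Ha /=; first by move=> _ ->.
move=> /andP[rac pth] lst; apply: (IH c _ pth lst).
have h1 : 0 < eta c * r c a by rewrite -rev mulr_gt0.
have := r0 c a; nra.
Qed.

End M_t5.
Import M_t5.

Module M_t7.
Section H.
Context (R : realType).
Lemma esum_ind (S : choiceType) (A : set S) (t : S) (b : bool) (c : R) :
  (b -> 0 <= c) -> (b -> A t) ->
  (\esum_(m in A) (if b && (m == t) then c else 0)%:E = (if b then c else 0)%:E)%E.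
Proof.
move=> c0 bA; case: b c0 bA => [/(_ isT) c0 /(_ isT) At|_ _]; last by rewrite esum1.
rewrite (esumID [set t]); last by move=> m _; case: ifP; rewrite lee_fin.
have -> : A `&` [set t] = [set t].
  by rewrite setIidr // => x /= ->.
rewrite esum_set1 /=; last by rewrite eqxx lee_fin.
rewrite eqxx esum1 ?adde0 // => m [_ /= /eqP /negPf ->] //.
Qed.

Lemma esum_three (S : choiceType) (A : set S) (I : finType)
  (b1 : I -> bool) (t1 : I -> S) (c1 : I -> R)
  (b2 : I -> I -> bool) (t2 : I -> I -> S) (c2 : I -> I -> R)
  (b3 : I -> bool) (t3 : I -> S) (c3 : I -> R) :
  (forall i, b1 i -> 0 <= c1 i) -> (forall j i, b2 j i -> 0 <= c2 j i) ->
  (forall i, b3 i -> 0 <= c3 i) ->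
  (forall i, b1 i -> A (t1 i)) -> (forall j i, i != j -> b2 j i -> A (t2 j i)) ->
  (forall i, b3 i -> A (t3 i)) ->
  (\esum_(m in A) (\sum_i (if b1 i && (m == t1 i) then c1 i else 0)
     + \sum_j \sum_(i | i != j) (if b2 j i && (m == t2 j i) then c2 j i else 0)
     + \sum_j (if b3 j && (m == t3 j) then c3 j else 0))%:E
  = (\sum_i (if b1 i then c1 i else 0)
     + \sum_j \sum_(i | i != j) (if b2 j i then c2 j i else 0)
     + \sum_j (if b3 j then c3 j else 0))%:E)%E.
Proof.
move=> c10 c20 c30 A1 A2 A3.
have ge0 (b b' : bool) (c : R) : (b -> 0 <= c) -> 0 <= (if b && b' then c else 0).
  by case: b => //= /(_ isT); case: b'.
set S1 := fun m => \sum_i (if b1 i && (m == t1 i) then c1 i else 0).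
set S2 := fun m => \sum_j \sum_(i | i != j) (if b2 j i && (m == t2 j i) then c2 j i else 0).
set S3 := fun m => \sum_j (if b3 j && (m == t3 j) then c3 j else 0).
have P1 m : 0 <= S1 m by apply: sumr_ge0 => i _; apply: ge0; apply: c10.
have P2 m : 0 <= S2 m.
  by apply: sumr_ge0 => i _; apply: sumr_ge0 => k _; apply: ge0; apply: c20.
have P3 m : 0 <= S3 m by apply: sumr_ge0 => i _; apply: ge0; apply: c30.
rewrite -/(S1 _) -/(S2 _) -/(S3 _).
under eq_esum do rewrite !EFinD.
rewrite esumD; last 2 first.
- by move=> m _; rewrite -EFinD lee_fin; apply: addr_ge0; [exact: P1|exact: P2].
- by move=> m _; rewrite lee_fin; exact: P3.
rewrite esumD; last 2 first.
- by move=> m _; rewrite lee_fin; exact: P1.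
- by move=> m _; rewrite lee_fin; exact: P2.
rewrite !EFinD; congr (_ + _ + _)%E.
- rewrite /S1 -sumEFin; under eq_esum do rewrite -sumEFin.
  rewrite esum_sum; last by move=> m i _ _; rewrite lee_fin; apply: ge0; apply: c10.
  by apply: eq_bigr => i _; rewrite esum_ind //; [exact: c10|exact: A1].
- rewrite /S2 -sumEFin; under eq_esum do rewrite -sumEFin.
  rewrite esum_sum; last first.
    by move=> m i _ _; rewrite lee_fin sumr_ge0 // => k _; apply: ge0; apply: c20.
  apply: eq_bigr => i _; rewrite -sumEFin; under eq_esum do rewrite -sumEFin.
  rewrite esum_sum; last by move=> m k _ _; rewrite lee_fin; apply: ge0; apply: c20.
  by apply: eq_bigr => k ki; rewrite esum_ind //; [exact: c20|exact: A2].
- rewrite /S3 -sumEFin; under eq_esum do rewrite -sumEFin.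
  rewrite esum_sum; last by move=> m i _ _; rewrite lee_fin; apply: ge0; apply: c30.
  by apply: eq_bigr => i _; rewrite esum_ind //; [exact: c30|exact: A3].
Qed.
End H.

End M_t7.
Import M_t7.

Module M_b2.

Section Ralpha.
Variables (R : realType) (J : nat) (r : 'I_J.+1 -> 'I_J.+1 -> R) (gamma : 'I_J -> R).
Lemma alpha_ext i : alpha gamma (ext i) = gamma i.
Proof. by rewrite /alpha /ext liftK. Qed.
Lemma alpha0 : alpha gamma ord0 = 1.
Proof. by rewrite /alpha unlift_none. Qed.
Lemma ra0 i : ralpha r gamma ord0 (ext i) = r ord0 (ext i) * gamma i.
Proof. by rewrite /ralpha (negPf (neq_lift _ _)) alpha_ext. Qed.
Lemma raji i j : i != j -> ralpha r gamma (ext j) (ext i) = r (ext j) (ext i) * gamma i.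
Proof.
move=> ij; rewrite /ralpha (inj_eq lift_inj) eq_sym (negPf ij) alpha_ext //.
Qed.
Lemma ra_0 j : ralpha r gamma (ext j) ord0 = r (ext j) ord0.
Proof. by rewrite /ralpha eq_sym (negPf (neq_lift _ _)) alpha0 mulr1. Qed.
End Ralpha.

Section Balance.
Variables (R : realType) (J : nat) (lam : R) (r : 'I_J.+1 -> 'I_J.+1 -> R)
  (eta : 'I_J.+1 -> R) (mu : 'I_J -> nat -> R) (gamma : 'I_J -> R)
  (a : 'I_J -> nat -> R) (h : state J -> R).
Hypothesis r0 : forall a b, 0 <= r a b.
Hypothesis lam0 : 0 <= lam.
Hypothesis eta0 : eta ord0 = lam.
Hypothesis rev : forall a b, eta a * r a b = eta b * r b a.
Hypothesis mu0 : forall j k, (0 < k)%N -> 0 < mu j k.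
Hypothesis g0 : forall j, 0 <= gamma j.
Hypothesis a0 : forall j k, 0 <= a j k.
Hypothesis arec : forall j k, a j k.+1 * mu j k.+1 = a j k * eta (ext j).
Hypothesis h0 : forall n : state J, 0 <= h n.
Hypothesis hinv : forall n m : state J, (forall j, gamma j == 0 -> m j = n j) -> h m = h n.

Definition fp (n : state J) := (\prod_(j | gamma j != 0) a j (n j)) * h n.

Lemma fp_ge0 (n : state J) : 0 <= fp n.
Proof. by rewrite /fp mulr_ge0 // prodr_ge0. Qed.

Lemma I1 (n : state J) j : fp (up n j) * gamma j * mu j (n j).+1 = fp n * gamma j * eta (ext j).
Proof.
have [gj|gj] := eqVneq (gamma j) 0; first by rewrite gj !mulr0 !mul0r.
rewrite /fp (bigD1 j) //= [in RHS](bigD1 j) //=.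
have -> : h (up n j) = h n.
  by apply: hinv => k gk; rewrite upE; case: eqP => // kj; rewrite kj (negPf gj) in gk.
rewrite (eq_bigr (fun k => a k (n k))); last first.
  by move=> k /andP[_ kj]; rewrite upE (negPf kj).
rewrite upE eqxx.
set P := \prod_(i | _) _.
have -> : a j (n j).+1 * P * h n * gamma j * mu j (n j).+1
        = (a j (n j).+1 * mu j (n j).+1) * (P * h n * gamma j) by ring.
by rewrite arec; ring.
Qed.

Lemma I2 (n : state J) i : (0 < n i)%N -> fp n * gamma i * mu i (n i) = fp (Defs.down n i) * gamma i * eta (ext i).
Proof.
move=> ni; rewrite -I1; congr (fp _ * _ * mu i _).
  apply/ffunP => k; rewrite upE downE; case: eqP => [->|//]; by rewrite prednK.
by rewrite downE eqxx prednK.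
Qed.

Lemma I3 (n : state J) i j : i != j ->
  fp (up (Defs.down n i) j) * gamma j * mu j (n j).+1 = fp (Defs.down n i) * gamma j * eta (ext j).
Proof.
move=> ij; rewrite -I1; congr (fp _ * _ * mu j _.+1).
by rewrite downE eq_sym (negPf ij).
Qed.

Lemma in_form (n m : state J) : fp m * rate lam mu r gamma m n =
  \sum_i (if (0 < n i)%N && (m == Defs.down n i)
          then fp (Defs.down n i) * (lam * (r ord0 (ext i) * gamma i)) else 0)
  + \sum_j \sum_(i | i != j) (if (0 < n i)%N && (m == up (Defs.down n i) j)
          then fp (up (Defs.down n i) j) * (gamma j * mu j (n j).+1 * (r (ext j) (ext i) * gamma i)) else 0)
  + \sum_j (if true && (m == up n j)
          then fp (up n j) * (gamma j * mu j (n j).+1 * r (ext j) ord0) else 0).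
Proof.
rewrite /rate !mulrDr !mulr_sumr; congr (_ + _ + _); apply: eq_bigr => j _.
- rewrite eq_up; case: andP => [[nj /eqP ->]|_]; [by rewrite ra0 | by rewrite mulr0].
- rewrite mulr_sumr; apply: eq_bigr => i ij.
  rewrite eq_updown //; case: andP => [[ni /eqP ->]|_]; last by rewrite mulr0.
  by rewrite raji // upE eqxx downE eq_sym (negPf ij).
- rewrite eq_down /=; case: eqP => [->|_]; last by rewrite mulr0.
  by rewrite ra_0 upE eqxx.
Qed.

Lemma out_form (n m : state J) : fp n * rate lam mu r gamma n m =
  \sum_i (if true && (m == up n i) then fp n * (lam * (r ord0 (ext i) * gamma i)) else 0)
  + \sum_j \sum_(i | i != j) (if (0 < n j)%N && (m == up (Defs.down n j) i)
        then fp n * (gamma j * mu j (n j) * (r (ext j) (ext i) * gamma i)) else 0)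
  + \sum_j (if (0 < n j)%N && (m == Defs.down n j)
        then fp n * (gamma j * mu j (n j) * r (ext j) ord0) else 0).
Proof.
rewrite /rate !mulrDr !mulr_sumr; congr (_ + _ + _); apply: eq_bigr => j _.
- by case: ifP; rewrite ?mulr0 // ra0.
- rewrite mulr_sumr; apply: eq_bigr => i ij.
  by case: ifP; rewrite ?mulr0 // raji // eq_sym.
- by case: ifP; rewrite ?mulr0 // ra_0.
Qed.

Lemma exchange_neq (F : 'I_J -> 'I_J -> R) :
  \sum_j \sum_(i | i != j) F j i = \sum_i \sum_(j | j != i) F j i.
Proof.
under eq_bigr do rewrite big_mkcond.
rewrite exchange_big; apply: eq_bigr => i _; rewrite [RHS]big_mkcond.
by apply: eq_bigr => j _; rewrite eq_sym.
Qed.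

Lemma balance (n : state J) :
  (\esum_(m in [set m | m != n]) (fp m * rate lam mu r gamma m n)%:E
   = \esum_(m in [set m | m != n]) (fp n * rate lam mu r gamma n m)%:E)%E.
Proof.
under eq_esum do rewrite in_form.
under [RHS]eq_esum do rewrite out_form.
rewrite !esum_three; first last.
all: try by move=> *; apply: mulr_ge0; [exact: fp_ge0|]; repeat apply: mulr_ge0; rewrite ?r0 ?g0 //; apply: ltW; apply: mu0.
all: try by move=> i _ /=; apply: up_neq.
all: try by move=> i ni /=; apply: down_neq.
all: try by move=> j i ij _ /=; apply: updown_neq.
all: try by move=> j i ij _ /=; apply: updown_neq; rewrite eq_sym.
congr (_%:E).
have eT3 : \sum_j fp (up n j) * (gamma j * mu j (n j).+1 * r (ext j) ord0)
    = \sum_i fp n * (lam * (r ord0 (ext i) * gamma i)).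
  apply: eq_bigr => j _.
  transitivity (fp (up n j) * gamma j * mu j (n j).+1 * r (ext j) ord0); first ring.
  rewrite I1; transitivity (fp n * gamma j * (eta (ext j) * r (ext j) ord0)); first ring.
  by rewrite -rev eta0; ring.
have eT1 : \sum_i (if (0 < n i)%N
       then fp (Defs.down n i) * (lam * (r ord0 (ext i) * gamma i)) else 0)
    = \sum_j (if (0 < n j)%N
       then fp n * (gamma j * mu j (n j) * r (ext j) ord0) else 0).
  apply: eq_bigr => i _; case: ifP => ni //.
  transitivity (fp n * gamma i * mu i (n i) * r (ext i) ord0); last ring.
  rewrite I2 //; transitivity (fp (Defs.down n i) * gamma i * (eta ord0 * r ord0 (ext i))).
    by rewrite eta0; ring.
  by rewrite rev; ring.
have eT2 : \sum_j \sum_(i | i != j)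
         (if (0 < n i)%N then fp (up (Defs.down n i) j) *
           (gamma j * mu j (n j).+1 * (r (ext j) (ext i) * gamma i)) else 0)
   = \sum_j \sum_(i | i != j) (if (0 < n j)%N
          then fp n * (gamma j * mu j (n j) * (r (ext j) (ext i) * gamma i)) else 0).
  transitivity (\sum_j \sum_(i | i != j) (if (0 < n i)%N then
      fp (Defs.down n i) * gamma j * (eta (ext j) * r (ext j) (ext i)) * gamma i else 0)).
    apply: eq_bigr => j _; apply: eq_bigr => i ij; case: ifP => ni //.
    transitivity (fp (up (Defs.down n i) j) * gamma j * mu j (n j).+1 * r (ext j) (ext i) * gamma i); first ring.
    by rewrite I3 //; ring.
  rewrite exchange_neq; apply: eq_bigr => i _; apply: eq_bigr => j ji.
  case: ifP => ni //.
  transitivity (fp n * gamma i * mu i (n i) * r (ext i) (ext j) * gamma j); last ring.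
  by rewrite I2 // rev; ring.
by rewrite eT1 eT2 eT3; ring.
Qed.
End Balance.

End M_b2.
Import M_b2.

Module M_s2.
Local Open Scope ereal_scope.
Lemma fsbig_setT_fin (R : realType) (T : finType) (F : T -> \bar R) :
  \sum_(x \in [set: T]) F x = \sum_(x : T) F x.
Proof.
rewrite fsbig_finite; last exact: finite_finset.
rewrite (perm_big (enum T)); first by rewrite big_enum.
apply: uniq_perm; rewrite ?enum_uniq //; first exact: finmap.fset_uniq.
move=> x.
rewrite in_fset_set ?mem_enum; first exact: mem_set.
exact: finite_finset.
Qed.

Section ProdEsum.
Variables (R : realType) (I : finType) (a : I -> nat -> R) (s : I -> R).
Hypothesis a0 : forall i k, (0 <= a i k)%R.
Hypothesis aS : forall i, series (a i) @ \oo --> s i.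

Definition emb N (g : {ffun I -> 'I_N.+1}) : {ffun I -> nat} := [ffun i => nat_of_ord (g i)].

Lemma emb_inj N : injective (@emb N).
Proof.
move=> g1 g2 /ffunP E; apply/ffunP => i; apply/val_inj.
by have := E i; rewrite !ffunE.
Qed.

Lemma box_sum N :
  \sum_(w \in range (@emb N)) (\prod_i a i (w i))%:E = (\prod_i series (a i) N.+1)%:E.
Proof.
rewrite fsbig_image; last by move=> x y _ _; apply: emb_inj.
rewrite fsbig_setT_fin sumEFin; congr (_%:E).
rewrite /series /=.
under [RHS]eq_bigr do rewrite big_mkord.
rewrite bigA_distr_bigA /=; apply: eq_bigr => g _; apply: eq_bigr => i _.
by rewrite ffunE.
Qed.

Lemma cvg_bigprod (r : seq I) (u : I -> nat -> R) (l : I -> R) :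
  (forall i, u i @ \oo --> l i) ->
  (fun N => \prod_(i <- r) u i N)%R @ \oo --> (\prod_(i <- r) l i)%R.
Proof.
move=> ul; elim: r => [|i r IH].
  rewrite big_nil; under eq_fun do rewrite big_nil; exact: cvg_cst.
rewrite big_cons; under eq_fun do rewrite big_cons.
exact: cvgM.
Qed.

Lemma series_le i N : (series (a i) N <= s i)%R.
Proof.
rewrite -(cvg_lim (@Rhausdorff R) (aS i)).
apply: nondecreasing_cvgn_le; last by apply/cvg_ex; exists (s i); exact: aS.
by apply: nondecreasing_series => k _ _; exact: a0.
Qed.

Lemma series_ge0 i N : (0 <= series (a i) N)%R.
Proof. by apply: sumr_ge0 => k _; exact: a0. Qed.

Lemma prod_esum :
  \esum_(w in [set: {ffun I -> nat}]) (\prod_i a i (w i))%:E = (\prod_i s i)%:E.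
Proof.
have up : \esum_(w in [set: {ffun I -> nat}]) (\prod_i a i (w i))%:E <= (\prod_i s i)%:E.
  apply: ge_ereal_sup => _ [X [finX _] <-].
  have [B XB] := finite_fsetP.1 finX.
  pose N := (\max_(w <- finmap.enum_fset B) \max_i w i)%N.
  have sub : X `<=` range (@emb N).
    move=> w; rewrite XB /= => wB.
    exists [ffun i => inord (w i)] => //; apply/ffunP => i; rewrite !ffunE inordK //.
    rewrite ltnS; apply: (@leq_trans (\max_i w i)); first exact: leq_bigmax.
    by apply: (@leq_bigmax_seq _ _ _ (fun w : {ffun I -> nat} => \max_i w i)).
  have H1 : \sum_(x \in X) (\prod_i a i (x i))%:E <=
            \sum_(w \in range (@emb N)) (\prod_i a i (w i))%:E.
    apply: lee_fsum_nneg_subset => //.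
    - exact: finite_image finite_finset.
    - by move=> w /[!inE] /sub.
    - by move=> w _; rewrite lee_fin prodr_ge0.
  apply: le_trans H1 _; rewrite box_sum lee_fin; apply: ler_prod => i _.
  by rewrite series_ge0 series_le.
have low N : (\prod_i series (a i) N.+1)%:E <=
    \esum_(w in [set: {ffun I -> nat}]) (\prod_i a i (w i))%:E.
  rewrite -box_sum; apply: esum_ge; exists (range (@emb N)) => //.
  by split => //; exact: finite_image finite_finset.
apply/eqP; rewrite eq_le up /=.
set E := esum _ _ in up low *.
have E0 : 0 <= E by apply: esum_ge0 => w _; rewrite lee_fin prodr_ge0.
have Efin : E \is a fin_num by rewrite ge0_fin_numE // (le_lt_trans up) ?ltry.
rewrite -(fineK Efin) lee_fin.
have cu : (fun N => \prod_i series (a i) N.+1)%R @ \oo --> (\prod_i s i)%R.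
  apply: cvg_bigprod => i; rewrite (cvg_shiftS (series (a i))); exact: aS.
rewrite -(cvg_lim (@Rhausdorff R) cu); apply: limr_le; first by apply/cvg_ex; eexists; exact: cu.
by apply: nearW => N; rewrite -lee_fin (fineK Efin).
Qed.
End ProdEsum.

Lemma esumZ (R : realType) (T : choiceType) (A : set T) (k : R) (f : T -> \bar R) :
  (0 <= k)%R -> (forall x, A x -> 0 <= f x) ->
  \esum_(x in A) (k%:E * f x) = k%:E * \esum_(x in A) f x.
Proof.
have le (k' : R) (g : T -> \bar R) : (0 <= k')%R -> (forall x, A x -> 0 <= g x) ->
    \esum_(x in A) (k'%:E * g x) <= k'%:E * \esum_(x in A) g x.
  move=> k0 g0; apply: ge_ereal_sup => _ [X [finX XA] <-].
  rewrite fsbig_finite // big_seq -ge0_sume_distrr; last first.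
    by move=> x; rewrite in_fset_set // inE => /XA /g0.
  apply: lee_wpmul2l; first by rewrite lee_fin.
  by rewrite -big_seq -fsbig_finite //; apply: ereal_sup_ubound; exists X.
move=> k0 f0; apply/eqP; rewrite eq_le le //=.
have [->|kpos] := eqVneq k 0%R.
  by rewrite mul0e; apply: esum_ge0 => x _; rewrite mul0e.
have kp : (0 < k)%R by rewrite lt_def kpos.
have := le (k^-1)%R (fun x => k%:E * f x).
rewrite invr_ge0 k0 => /(_ isT).
have -> : (fun x => (k^-1)%R%:E * (k%:E * f x)) = f.
  by apply/funext => x; rewrite muleA -EFinM mulVf // mul1e.
move=> /(_ _) H.
have H' := H (fun x Ax => mule_ge0 (k0 : 0 <= k%:E) (f0 x Ax)).
rewrite -(@lee_pmul2l _ (k^-1)%R%:E) ?lte_fin ?invr_gt0 //.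
by rewrite muleA -EFinM mulVf // mul1e.
Qed.

End M_s2.
Import M_s2.

Module M_p1.
Section Pterm.
Variables (R : realType) (J : nat) (eta : 'I_J.+1 -> R) (mu : 'I_J -> nat -> R).
Hypothesis etapos : forall b, 0 < eta b.
Hypothesis mu0 : forall j k, (0 < k)%N -> 0 < mu j k.
Hypothesis cv : forall j, cvgn (series (pterm eta mu j)).

Lemma pterm_ge0 j k : 0 <= pterm eta mu j k.
Proof.
rewrite /pterm big_nat_cond; apply: prodr_ge0 => i /andP[/andP[i1 _] _].
by rewrite divr_ge0 // ltW // ?etapos // mu0.
Qed.

Lemma pterm0 j : pterm eta mu j 0 = 1.
Proof. by rewrite /pterm big_geq. Qed.

Lemma pterm_rec j k : pterm eta mu j k.+1 * mu j k.+1 = pterm eta mu j k * eta (ext j).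
Proof.
rewrite /pterm big_nat_recr //= -!mulrA mulVf ?mulr1 //.
by rewrite gt_eqF // mu0.
Qed.

Lemma Cnorm_ge1 j : 1 <= Cnorm eta mu j.
Proof.
rewrite /Cnorm; have := nondecreasing_cvgn_le _ (cv j) 1.
rewrite /series /= big_nat1 pterm0; apply.
by apply: nondecreasing_series => k _ _; exact: pterm_ge0.
Qed.

Lemma Cnorm_gt0 j : 0 < Cnorm eta mu j.
Proof. exact: lt_le_trans ltr01 (Cnorm_ge1 j). Qed.

Definition an j k := pterm eta mu j k / Cnorm eta mu j.

Lemma an_ge0 j k : 0 <= an j k.
Proof. by rewrite divr_ge0 ?pterm_ge0 // ltW // Cnorm_gt0. Qed.

Lemma an_rec j k : an j k.+1 * mu j k.+1 = an j k * eta (ext j).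
Proof. by rewrite /an mulrAC pterm_rec mulrAC. Qed.

Lemma an_series j : series (an j) @ \oo --> (1 : R).
Proof.
have -> : series (an j) = (fun n => series (pterm eta mu j) n * (Cnorm eta mu j)^-1).
  by apply/funext => n; rewrite /series /= mulr_suml.
have Cn0 : Cnorm eta mu j != 0 by rewrite gt_eqF // Cnorm_gt0.
rewrite -(mulfV Cn0).
apply: cvgM; last exact: cvg_cst.
exact: (cv j).
Qed.
End Pterm.
Arguments an {R J} eta mu j k.

End M_p1.
Import M_p1.

Module M_n1.
Local Open Scope ereal_scope.

Section Merge.
Variables (R : realType) (J : nat) (gamma : 'I_J -> R).
Definition Wpred : {pred 'I_J} := [pred j | gamma j != 0%R].
Definition Wt := {x : 'I_J | x \in Wpred}.
Definition Bt := {j : 'I_J | gamma j == 0%R}.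
Definition Wconf := {ffun Wt -> nat}.
Definition restrW (n : state J) : Wconf := [ffun k => n (val k)].
Definition merge (p : Bconf gamma * Wconf) : state J :=
  [ffun j => match (insub j : option Bt) with
    | Some k => p.1 k
    | None => match (insub j : option Wt) with Some k => p.2 k | None => 0%N end end].

Lemma merge_bij : bijective merge.
Proof.
exists (fun n => (restrB gamma n, restrW n)).
  move=> [c w] /=; congr (_, _); apply/ffunP => k; rewrite !ffunE.
    by rewrite (valK k).
  rewrite insubN; last exact: (valP k).
  by rewrite (valK k).
move=> n; apply/ffunP => j; rewrite !ffunE /=.
case: insubP => [k _ kj|nB]; first by rewrite ffunE kj.
case: insubP => [k _ kj|]; first by rewrite ffunE kj.
by rewrite inE nB.
Qed.

Lemma prod_W (F : 'I_J -> R) :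
  (\prod_(j | gamma j != 0%R) F j = \prod_(k : Wt) F (val k))%R.
Proof. by rewrite -(big_sub Wpred). Qed.
End Merge.
Arguments Wconf {R J} gamma.
Arguments Wt {R J} gamma.
Arguments merge {R J gamma} p.
Arguments restrW {R J gamma} n.
Arguments Wpred {R J} gamma.
Arguments Bt {R J} gamma.

Lemma restrB_merge (R : realType) J (gamma : 'I_J -> R) (p : Bconf gamma * Wconf gamma) : restrB gamma (merge p) = p.1.
Proof. by apply/ffunP => k; rewrite !ffunE (valK k). Qed.

Lemma merge_W (R : realType) J (gamma : 'I_J -> R) (p : Bconf gamma * Wconf gamma) (k : Wt gamma) : merge p (val k) = p.2 k.
Proof.
rewrite ffunE insubN; last first.
  by have := valP k; rewrite inE.
by rewrite (valK k).
Qed.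

Section Norm.
Variables (R : realType) (J : nat) (eta : 'I_J.+1 -> R) (mu : 'I_J -> nat -> R).
Hypothesis etapos : forall b, (0 < eta b)%R.
Hypothesis mu0 : forall j k, (0 < k)%N -> (0 < mu j k)%R.
Hypothesis cv : forall j, cvgn (series (pterm eta mu j)).
Let anG := @an_ge0 R J eta mu etapos mu0 cv.
Let anS := @an_series R J eta mu etapos mu0 cv.

Lemma xi_norm : \esum_(n in [set: state J]) (xi eta mu n)%:E = 1.
Proof.
have := @prod_esum R 'I_J (an eta mu) (fun _ => 1%R) anG anS.
by rewrite big1_eq.
Qed.

Lemma xi_phi_norm (gamma : 'I_J -> R) (phi : Bconf gamma -> R) :
  (forall c, 0 <= phi c)%R -> \esum_(c in [set: Bconf gamma]) (phi c)%:E = 1 ->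
  \esum_(n in [set: state J]) (xi_phi eta mu phi n)%:E = 1.
Proof.
move=> phi0 phi1.
rewrite (reindex_esum [set: Bconf gamma * Wconf gamma] [set: state J] (@merge R J gamma)); last first.
  by rewrite setTT_bijective; exact: merge_bij.
have -> : [set: Bconf gamma * Wconf gamma] = [set: Bconf gamma] `*`` (fun _ => [set: Wconf gamma]).
  by apply/seteqP; split.
rewrite -(@esum_esum R _ _ [set: Bconf gamma] (fun _ => [set: Wconf gamma]) (fun c w => (xi_phi eta mu phi (merge (c, w)))%:E)); last first.
  move=> c w _ _; rewrite lee_fin /xi_phi mulr_ge0 //.
  by apply: prodr_ge0 => j _; exact: anG.
rewrite -phi1; apply: eq_esum => c _.
have E w : xi_phi eta mu phi (merge (c, w)) =
           (phi c * \prod_(k : Wt gamma) an eta mu (val k) (w k))%R.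
  rewrite /xi_phi restrB_merge mulrC; congr (_ * _)%R.
  by rewrite prod_W; apply: eq_bigr => k _; rewrite merge_W.
under eq_esum do rewrite E EFinM.
rewrite esumZ //; last by move=> w _; rewrite lee_fin prodr_ge0 // => k _; exact: anG.
have := @prod_esum R (Wt gamma) (fun k => an eta mu (val k)) (fun _ => 1%R)
   (fun k => anG (val k)) (fun k => anS (val k)).
by rewrite big1_eq => ->; rewrite mule1.
Qed.
End Norm.

End M_n1.
Import M_n1.

Module M_q1.

Section Transfer.
Variables (R : realType) (J : nat) (lam : R) (mu : 'I_J -> nat -> R)
  (r : 'I_J.+1 -> 'I_J.+1 -> R) (gamma : 'I_J -> R).
Hypothesis r0 : forall a b, 0 <= r a b.
Hypothesis lam0 : 0 <= lam.
Hypothesis mu0 : forall j k, (0 < k)%N -> 0 < mu j k.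
Hypothesis g01 : forall j, 0 <= gamma j <= 1.
Hypothesis gpos : forall j, gamma j != 0.

Let c := \prod_j gamma j.
Lemma c_le j : c <= gamma j.
Proof.
rewrite /c (bigD1 j) //=.
have P1 : \prod_(i | i != j) gamma i <= 1 by apply: prodr_ile1 => i _; exact: g01.
have P0 : 0 <= \prod_(i | i != j) gamma i by apply: prodr_ge0 => i _; case/andP: (g01 i).
have := g01 j; case/andP => g0 _.
nra.
Qed.
Lemma c_gt0 : 0 < c.
Proof.
apply: prodr_gt0 => i _; have := g01 i; case/andP => g0 _.
by rewrite lt_def gpos.
Qed.
Lemma cc_le j : c * c <= gamma j.
Proof. have := c_le j; have := c_gt0; have := g01 j; case/andP => _ g1; nra. Qed.
Lemma cc_le2 i j : c * c <= gamma j * gamma i.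
Proof. by apply: ler_pM; [exact: ltW c_gt0|exact: ltW c_gt0|exact: c_le|exact: c_le]. Qed.

Lemma rate_lower (n m : state J) :
  c * c * rate lam mu r (fun _ => 1) n m <= rate lam mu r gamma n m.
Proof.
have g0 j : 0 <= gamma j by case/andP: (g01 j).
rewrite /rate !mulrDr !mulr_sumr; apply: lerD; first apply: lerD.
- apply: ler_sum => i _; case: ifP => _; last by rewrite mulr0.
  rewrite !ra0; have := cc_le i; have : 0 <= lam * r ord0 (ext i) by rewrite mulr_ge0.
  nra.
- apply: ler_sum => j _; rewrite mulr_sumr; apply: ler_sum => i ij.
  case: ifP => [/andP[nj _]|_]; last by rewrite mulr0.
  rewrite !raji //=; have := cc_le2 i j.
  have : 0 <= mu j (n j) * r (ext j) (ext i) by rewrite mulr_ge0 // ltW // mu0.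
  nra.
- apply: ler_sum => j _; case: ifP => [/andP[nj _]|_]; last by rewrite mulr0.
  rewrite !ra_0 /=; have := cc_le j.
  have : 0 <= mu j (n j) * r (ext j) ord0 by rewrite mulr_ge0 // ltW // mu0.
  nra.
Qed.

Lemma pos_transfer (n m : state J) :
  0 < rate lam mu r (fun _ => 1) n m -> 0 < rate lam mu r gamma n m.
Proof.
move=> H; apply: lt_le_trans (rate_lower n m).
by rewrite !mulr_gt0 // c_gt0.
Qed.
End Transfer.

Section Frozen.
Variables (R : realType) (J : nat) (lam : R) (mu : 'I_J -> nat -> R)
  (r : 'I_J.+1 -> 'I_J.+1 -> R) (gamma : 'I_J -> R).

Lemma frozen (n m : state J) : 0 < rate lam mu r gamma n m ->
  forall j, gamma j == 0 -> m j = n j.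
Proof.
move=> H j /eqP gj; apply/eqP; apply: contraLR H => mj; rewrite -leNgt le_eqVlt; apply/orP; left.
apply/eqP; rewrite /rate !big1 ?addr0 //.
- move=> j' _; case: ifP => [/andP[nj' /eqP Em]|_] //.
  case: (eqVneq j' j) => [->|jj']; first by rewrite gj !mul0r.
  by move: mj; rewrite Em downE (eq_sym j j') (negPf jj') eqxx.
- move=> j' _; apply: big1 => i ij'; case: ifP => [/andP[nj' /eqP Em]|_] //.
  case: (eqVneq j' j) => [->|jj']; first by rewrite gj !mul0r.
  case: (eqVneq i j) => [ei|ij]; first by rewrite raji // ei gj !mulr0.
  move: mj; rewrite Em upE downE.
  by rewrite (eq_sym j i) (negPf ij) (eq_sym j j') (negPf jj') eqxx.
- move=> i _; case: eqP => [Em|] //; rewrite ra0.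
  case: (eqVneq i j) => [->|ij]; first by rewrite gj !mulr0.
  by move: mj; rewrite Em upE (eq_sym j i) (negPf ij) eqxx.
Qed.
End Frozen.

End M_q1.
Import M_q1.

Lemma path_frozen (R : realType) (J : nat) (lam : R) (mu : 'I_J -> nat -> R)
  (r : 'I_J.+1 -> 'I_J.+1 -> R) (gamma : 'I_J -> R) j (x : state J) s :
  gamma j == 0 -> path (fun a b => 0 < rate lam mu r gamma a b) x s -> last x s j = x j.
Proof.
move=> gj; elim: s x => [|y s IH] x //= /andP[xy p].
by rewrite IH // (@frozen _ _ _ _ _ _ _ _ xy).
Qed.

Theorem theorem3p4 (R : realType) (J : nat) (lamj : 'I_J -> R) (lam : R)
    (r : 'I_J.+1 -> 'I_J.+1 -> R) (eta : 'I_J.+1 -> R) (mu : 'I_J -> nat -> R)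
    (gamma : 'I_J -> R) :
  (forall j, 0 <= lamj j) ->
  lam = \sum_(j : 'I_J) lamj j -> 0 < lam ->
  (forall a b, 0 <= r a b) ->
  (forall a, \sum_(b : 'I_J.+1) r a b = 1) ->
  (forall a b, connect (fun a b => 0 < r a b) a b) ->
  r ord0 ord0 = 0 ->
  (forall j, r ord0 (ext j) = lamj j / lam) ->
  eta ord0 = lam ->
  (forall b, eta b = \sum_(a : 'I_J.+1) eta a * r a b) ->
  (forall a b, eta a * r a b = eta b * r b a) ->
  (forall j k, (0 < k)%N -> 0 < mu j k) ->
  (forall j, cvgn (series (pterm eta mu j))) ->
  ergodic (rate lam mu r (fun _ => 1)) ->
  (forall j, 0 <= gamma j <= 1) ->
  [/\ stationary (rate lam mu r gamma) (xi eta mu),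
      (forall j, gamma j != 0) -> ergodic (rate lam mu r gamma) &
      (exists j, gamma j == 0) ->
        [/\ ~ irreducible (rate lam mu r gamma),
            (forall n m : state J, 0 < rate lam mu r gamma n m ->
               forall j, gamma j == 0 -> m j = n j) &
            forall phi : Bconf gamma -> R,
              (forall c, 0 <= phi c) ->
              (\esum_(c in [set: Bconf gamma]) (phi c)%:E = 1)%E ->
              stationary (rate lam mu r gamma) (xi_phi eta mu phi)]].
Proof.
move=> _ _ lam0 r0 _ conn _ _ eta0 _ rev mu0 cv erg g01.
have etapos := @eta_pos R J lam r eta lam0 r0 conn eta0 rev.
have g0 j : 0 <= gamma j by case/andP: (g01 j).
have anG := @an_ge0 R J eta mu etapos mu0 cv.
have anR := @an_rec R J eta mu mu0.
have stat : stationary (rate lam mu r gamma) (xi eta mu).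
  split.
  - by move=> n; apply: prodr_ge0 => j _; exact: anG.
  - exact: xi_norm.
  - move=> n.
    pose h (n : state J) := \prod_(j | gamma j == 0) an eta mu j (n j).
    have -> : xi eta mu = fp R J gamma (an eta mu) h.
      apply/funext => m; rewrite /xi /fp /h (bigID (fun j => gamma j != 0)) /=.
      by congr (_ * _); apply: eq_bigl => j; rewrite negbK.
    apply: (@balance R J lam r eta) => //; first exact: ltW.
    + by move=> m; apply: prodr_ge0 => j _; exact: anG.
    + move=> m m' E; rewrite /h; apply: eq_bigr => j gj.
      by rewrite E.
split => //.
  move=> gpos; split; last by exists (xi eta mu).
  move=> n m; have [s /andP[p l]] := erg.1 n m.
  exists s; rewrite l andbT; apply: sub_path p => x y.
  exact: (@pos_transfer R J lam mu r gamma r0 (ltW lam0) mu0 g01 gpos).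
move=> [j gj]; split.
- move=> irr; have [s /andP[p /eqP l]] := irr [ffun _ => 0%N] (up [ffun _ => 0%N] j).
  have := @path_frozen R J lam mu r gamma j _ _ gj p; rewrite l upE eqxx !ffunE.
  by [].
- by move=> n m H k gk; apply: (@frozen _ _ _ _ _ _ _ _ H).
- move=> phi phi0 phi1; split.
  + by move=> n; rewrite mulr_ge0 // prodr_ge0 // => k _; exact: anG.
  + exact: xi_phi_norm.
  + move=> n.
    have -> : xi_phi eta mu phi = fp R J gamma (an eta mu) (fun n => phi (restrB gamma n)) by [].
    apply: (@balance R J lam r eta) => //; first exact: ltW.
    move=> m m' E; congr phi; apply/ffunP => k; rewrite !ffunE E //.
    exact: (valP k).
Qed.
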